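(* For every constant $c_0>0$ there is $C_0>0$ such that for every $C\ge C_0$ the following holds for all sufficiently large $n$. Let $1/n\le\theta\le1$, $p=\lceil Cn\log^3 n\rceil$, and $T:=\dfrac{c_0\,p\sqrt{\theta/n}}{\log n}$. Let $X$ be the $n\times p$ random matrix with iid entries $x_{ij}=\chi_{ij}\xi_{ij}$, $\chi_{ij}$ iid indicators with $\mathbb{P}(\chi_{ij}=1)=\theta$ and $\xi_{ij}$ iid Rademacher, independent of the $\chi$'s. Let $\alpha=2^{l}\cdot\frac{2}{n}$ for an integer $l\ge0$ with $\alpha\le 1$. Then for all $v,w\in\mathbb{R}^n$ with $\|v\|_1\le1$, $\|w\|_1\le1$, $\|v-w\|_\infty\le2\alpha$ and $|\mu_v-\mu_w|\le T/6$, $$\mathbb{P}\Big(\big|\,\|X^Tv\|_1-\|X^Tw\|_1\,\big|\ge T\Big)\le\exp(-5\alpha^{-1}\log n).$$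
   Context: $\mu_v:=\mathbb{E}\|X^Tv\|_1$. Rademacher variables take values $\pm1$ with probability $1/2$ each. *)

(* Defs.v *)
From Stdlib Require Import Reals List.
Import ListNotations.
Open Scope R_scope.

Fixpoint Rsum (k : nat) (f : nat -> R) : R :=
  match k with
  | O => 0
  | S k' => Rsum k' f + f k'
  end.

(* A sample of the randomness: a list of n*p pairs (chi_ij, xi_ij),
   entry (i,j) stored at position i*p+j; chi = true means chi_ij = 1,
   xi = true means xi_ij = +1, xi = false means xi_ij = -1. *)
Definition sample := list (bool * bool).

Fixpoint samples (k : nat) : list sample :=
  match k with
  | O => [nil]
  | S k' => flat_map (fun s => map (fun e => e :: s)
                 [(true,true); (true,false); (false,true); (false,false)])
              (samples k')
  end.

Definition weight (theta : R) (s : sample) : R :=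
  fold_right (fun (e : bool * bool) (acc : R) => ((if fst e then theta else 1 - theta) * / 2) * acc) 1 s.

Definition entry (p : nat) (s : sample) (i j : nat) : R :=
  let e := nth (i * p + j) s (false, false) in
  (if fst e then 1 else 0) * (if snd e then 1 else -1).

Definition normXTv (n p : nat) (s : sample) (v : nat -> R) : R :=
  Rsum p (fun j => Rabs (Rsum n (fun i => entry p s i j * v i))).

Definition Expect (n p : nat) (theta : R) (f : sample -> R) : R :=
  fold_right (fun s acc => weight theta s * f s + acc) 0 (samples (n * p)).

Definition mu (n p : nat) (theta : R) (v : nat -> R) : R :=
  Expect n p theta (fun s => normXTv n p s v).

Definition ProbGe (n p : nat) (theta : R) (f : sample -> R) (t : R) : R :=
  Expect n p theta (fun s => if Rle_dec t (f s) then 1 else 0).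

Definition l1norm (n : nat) (v : nat -> R) : R := Rsum n (fun i => Rabs (v i)).

(* Main.v *)
Require Import Defs.
From Stdlib Require Import Reals Lra Lia Psatz List Arith ZArith.
Import ListNotations.
Open Scope R_scope.


Definition EE (th : R) (k : nat) (f : sample -> R) : R :=
  fold_right (fun s acc => weight th s * f s + acc) 0 (samples k).

Definition Ew (th : R) (g : bool*bool -> R) : R :=
  th * / 2 * g (true,true) + th * / 2 * g (true,false)
  + (1-th) * / 2 * g (false,true) + (1-th) * / 2 * g (false,false).

Lemma EE_0 th f : EE th 0 f = f nil.
Proof. unfold EE; simpl; ring. Qed.

Lemma EE_S th k f : EE th (S k) f = EE th k (fun s => Ew th (fun e => f (e::s))).
Proof.
  unfold EE. simpl samples.
  induction (samples k) as [|a l IH]; simpl; [reflexivity|].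
  rewrite IH. unfold Ew. ring.
Qed.

Lemma EE_ext th k f g : (forall s, f s = g s) -> EE th k f = EE th k g.
Proof.
  intro H. unfold EE. induction (samples k); simpl; [reflexivity|]. rewrite H, IHl; reflexivity.
Qed.

Lemma EE_lin th k a b f g :
  EE th k (fun s => a * f s + b * g s) = a * EE th k f + b * EE th k g.
Proof.
  unfold EE. induction (samples k); simpl; [ring|]. rewrite IHl; ring.
Qed.

Lemma EE_const th k c : EE th k (fun _ => c) = c.
Proof.
  revert c; induction k; intro c.
  - rewrite EE_0; reflexivity.
  - rewrite EE_S. transitivity (EE th k (fun _ => c)); [apply EE_ext; intro s; unfold Ew; field | apply IHk].
Qed.

Lemma Ew_mono th f g : 0 <= th <= 1 -> (forall e, f e <= g e) -> Ew th f <= Ew th g.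
Proof.
  intros Hth H. unfold Ew.
  pose proof (H (true,true)); pose proof (H (true,false)); pose proof (H (false,true)); pose proof (H (false,false)).
  assert (0 <= th * / 2) by lra. assert (0 <= (1-th) * / 2) by lra.
  repeat apply Rplus_le_compat; apply Rmult_le_compat_l; assumption.
Qed.

Lemma EE_mono th k f g : 0 <= th <= 1 -> (forall s, f s <= g s) -> EE th k f <= EE th k g.
Proof.
  intro Hth; revert f g; induction k; intros f g H.
  - rewrite !EE_0; apply H.
  - rewrite !EE_S. apply IHk. intro s. apply Ew_mono; auto.
Qed.

Lemma EE_plus th k f g : EE th k (fun s => f s + g s) = EE th k f + EE th k g.
Proof.
  rewrite <- (Rmult_1_l (EE th k f)), <- (Rmult_1_l (EE th k g)), <- EE_lin.
  apply EE_ext; intro; ring.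
Qed.

Lemma EE_scal th k a f : EE th k (fun s => a * f s) = a * EE th k f.
Proof.
  transitivity (EE th k (fun s => a * f s + 0 * f s)). apply EE_ext; intro; ring.
  rewrite EE_lin; ring.
Qed.

Lemma EE_minus th k f g : EE th k (fun s => f s - g s) = EE th k f - EE th k g.
Proof.
  transitivity (EE th k (fun s => 1 * f s + (-1) * g s)). apply EE_ext; intro; ring.
  rewrite EE_lin; ring.
Qed.

Definition d0 : bool * bool := (false,false).

Definition dep_on (A : nat -> bool) (g : sample -> R) :=
  forall s t, (forall i, A i = true -> nth i s d0 = nth i t d0) -> g s = g t.

Lemma dep_on_mono A B g : (forall m, A m = true -> B m = true) -> dep_on A g -> dep_on B g.
Proof. intros HAB H s t Hst. apply H. intros i Hi. apply Hst, HAB, Hi. Qed.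

Lemma EE_indep th k : forall A g h, dep_on A g -> dep_on (fun m => negb (A m)) h ->
  EE th k (fun s => h s * g s) = EE th k h * EE th k g.
Proof.
  induction k; intros A g h Hg Hh.
  - rewrite !EE_0; reflexivity.
  - rewrite !EE_S. destruct (A 0%nat) eqn:HA0.
    + assert (Hc : forall e s, h (e::s) = h (d0::s)).
      { intros e s. apply Hh. intros [|i] Hi; simpl in *; [rewrite HA0 in Hi; discriminate | reflexivity]. }
      transitivity (EE th k (fun s => h (d0::s) * Ew th (fun e => g (e::s)))).
      { apply EE_ext; intro s. unfold Ew. rewrite (Hc (true,true) s), (Hc (true,false) s), (Hc (false,true) s); unfold d0; ring. }
      rewrite (IHk (fun m => A (S m))).
      * f_equal. apply EE_ext; intro s. unfold Ew. rewrite (Hc (true,true) s), (Hc (true,false) s), (Hc (false,true) s); unfold d0; field.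
      * intros s t Hst. unfold Ew. f_equal; [f_equal|]; [f_equal|..]; f_equal; apply Hg;
        intros [|i] Hi; simpl; auto.
      * intros s t Hst. apply Hh. intros [|i] Hi; simpl; auto.
    + assert (Hc : forall e s, g (e::s) = g (d0::s)).
      { intros e s. apply Hg. intros [|i] Hi; simpl in *; [rewrite HA0 in Hi; discriminate | reflexivity]. }
      transitivity (EE th k (fun s => Ew th (fun e => h (e::s)) * g (d0::s))).
      { apply EE_ext; intro s. unfold Ew. rewrite (Hc (true,true) s), (Hc (true,false) s), (Hc (false,true) s); unfold d0; ring. }
      rewrite (IHk (fun m => A (S m))).
      * f_equal. apply EE_ext; intro s. unfold Ew. rewrite (Hc (true,true) s), (Hc (true,false) s), (Hc (false,true) s); unfold d0; field.
      * intros s t Hst. apply Hg. intros [|i] Hi; simpl; auto.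
      * intros s t Hst. unfold Ew. f_equal; [f_equal|]; [f_equal|..]; f_equal; apply Hh;
        intros [|i] Hi; simpl; auto.
Qed.


Fixpoint Rprod (k : nat) (f : nat -> R) : R :=
  match k with O => 1 | S k' => Rprod k' f * f k' end.

Lemma dep_on_prod B q (F : nat -> sample -> R) :
  (forall i, (i < q)%nat -> dep_on B (F i)) -> dep_on B (fun s => Rprod q (fun i => F i s)).
Proof.
  induction q; intros H s t Hst; simpl; [reflexivity|].
  rewrite (IHq (fun i Hi => H i (Nat.lt_lt_succ_r _ _ Hi)) s t Hst).
  rewrite (H q (Nat.lt_succ_diag_r q) s t Hst). reflexivity.
Qed.

Lemma EE_prod th k q (F : nat -> sample -> R) (A : nat -> nat -> bool) :
  (forall i, (i < q)%nat -> dep_on (A i) (F i)) ->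
  (forall i i' m, (i < i')%nat -> (i' < q)%nat -> A i m = true -> A i' m = false) ->
  EE th k (fun s => Rprod q (fun i => F i s)) = Rprod q (fun i => EE th k (F i)).
Proof.
  induction q; intros HF HA; simpl.
  - apply EE_const.
  - rewrite (EE_indep th k (A q) (F q) (fun s => Rprod q (fun i => F i s))).
    + rewrite IHq; [reflexivity | intros i Hi; apply HF; lia | intros i i2 m H1 H2 H3; apply (HA i i2 m); auto; lia].
    + apply HF; lia.
    + apply dep_on_prod. intros i Hi. apply (dep_on_mono (A i)).
      * intros m Hm. rewrite (HA i q m); auto.
      * apply HF; lia.
Qed.

Lemma EE_pos th k : forall pos (G : bool*bool -> R), (pos < k)%nat ->
  EE th k (fun s => G (nth pos s d0)) = Ew th G.
Proof.
  induction k; intros pos G H; [lia|].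
  rewrite EE_S. destruct pos as [|pos].
  - simpl. apply EE_const.
  - simpl. transitivity (EE th k (fun s => G (nth pos s d0))).
    + apply EE_ext; intro s. unfold Ew. field.
    + apply IHk; lia.
Qed.

Lemma Rsum_ext k f g : (forall i, (i < k)%nat -> f i = g i) -> Rsum k f = Rsum k g.
Proof. induction k; intro H; simpl; [reflexivity|]. rewrite IHk, H; auto. Qed.

Lemma Rprod_ext k f g : (forall i, (i < k)%nat -> f i = g i) -> Rprod k f = Rprod k g.
Proof. induction k; intro H; simpl; [reflexivity|]. rewrite IHk, H; auto. Qed.

Lemma Rsum_minus k f g : Rsum k (fun i => f i - g i) = Rsum k f - Rsum k g.
Proof. induction k; simpl; [ring|]. rewrite IHk; ring. Qed.

Lemma Rsum_plus k f g : Rsum k (fun i => f i + g i) = Rsum k f + Rsum k g.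
Proof. induction k; simpl; [ring|]. rewrite IHk; ring. Qed.

Lemma Rsum_scal k a f : Rsum k (fun i => a * f i) = a * Rsum k f.
Proof. induction k; simpl; [ring|]. rewrite IHk; ring. Qed.

Lemma Rsum_le k f g : (forall i, (i < k)%nat -> f i <= g i) -> Rsum k f <= Rsum k g.
Proof. induction k; intro H; simpl; [lra|]. apply Rplus_le_compat; auto. Qed.

Lemma Rsum_abs k f : Rabs (Rsum k f) <= Rsum k (fun i => Rabs (f i)).
Proof.
  induction k; simpl. rewrite Rabs_R0; lra.
  eapply Rle_trans; [apply Rabs_triang|]. lra.
Qed.

Lemma exp_Rsum k f : exp (Rsum k f) = Rprod k (fun i => exp (f i)).
Proof. induction k; simpl. apply exp_0. rewrite exp_plus, IHk; reflexivity. Qed.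

Lemma Rprod_nonneg k f : (forall i, (i < k)%nat -> 0 <= f i) -> 0 <= Rprod k f.
Proof. induction k; intro H; simpl; [lra|]. apply Rmult_le_pos; auto. Qed.

Lemma Rprod_le k f g : (forall i, (i < k)%nat -> 0 <= f i <= g i) -> Rprod k f <= Rprod k g.
Proof.
  induction k; intro H; simpl; [lra|].
  apply Rmult_le_compat.
  - apply Rprod_nonneg. intros i Hi; apply H; lia.
  - apply H; lia.
  - apply IHk; intros i Hi; apply H; lia.
  - apply H; lia.
Qed.

Lemma EE_Rsum th k q (F : nat -> sample -> R) :
  EE th k (fun s => Rsum q (fun i => F i s)) = Rsum q (fun i => EE th k (F i)).
Proof.
  induction q; simpl. apply EE_const.
  rewrite EE_plus, IHq; reflexivity.
Qed.

Lemma EE_abs th k f : 0 <= th <= 1 -> Rabs (EE th k f) <= EE th k (fun s => Rabs (f s)).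
Proof.
  intro Hth. apply Rabs_le. split.
  - replace (- EE th k (fun s => Rabs (f s))) with (EE th k (fun s => -1 * Rabs (f s))).
    + apply EE_mono; auto. intro s. pose proof (Rle_abs (- f s)). rewrite Rabs_Ropp in *. lra.
    + rewrite EE_scal; ring.
  - apply EE_mono; auto. intro s. apply Rle_abs.
Qed.


Definition ch (u : R) : R := (exp u + exp (- u)) * / 2.

Lemma exp_le x y : x <= y -> exp x <= exp y.
Proof. intro H. destruct (Req_dec x y). subst; lra. left; apply exp_increasing; lra. Qed.

Lemma exp_inv x : exp x * exp (- x) = 1.
Proof. rewrite <- exp_plus. replace (x + - x) with 0 by ring. apply exp_0. Qed.

Lemma ch_even u : ch (- u) = ch u.
Proof. unfold ch. rewrite Ropp_involutive. ring. Qed.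

Lemma ch_ge1 u : 1 <= ch u.
Proof. unfold ch. pose proof (exp_ineq1_le u). pose proof (exp_ineq1_le (-u)). lra. Qed.

Lemma exp_le_ch u : exp u <= 1 + u + 2 * (ch u - 1).
Proof. unfold ch. pose proof (exp_ineq1_le (-u)). lra. Qed.

Lemma expm1_le x : 0 <= x -> exp x - 1 <= x * exp x.
Proof.
  intro H. pose proof (exp_ineq1_le (-x)). pose proof (exp_inv x). pose proof (exp_pos x).
  nra.
Qed.

Lemma expm1_le3 x : 0 <= x <= 1 -> exp x - 1 <= 3 * x.
Proof.
  intro H. pose proof (expm1_le x (proj1 H)). pose proof (exp_le x 1 (proj2 H)).
  pose proof exp_le_3. nra.
Qed.

Lemma ch_upper u : -1 <= u <= 1 -> ch u - 1 <= 14 * u^2.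
Proof.
  intro H.
  assert (E: ch u - 1 = (exp u - 1)^2 * exp (-u) * / 2).
  { unfold ch. pose proof (exp_inv u) as Hi.
    replace ((exp u - 1)^2 * exp (-u) * / 2) with ((exp u * (exp u * exp (-u)) - 2 * (exp u * exp (-u)) + exp (-u)) * / 2) by ring.
    rewrite Hi. field. }
  assert (Hsq: (exp u - 1)^2 <= 9 * u^2).
  { destruct (Rle_lt_dec 0 u).
    - pose proof (expm1_le3 u ltac:(lra)). pose proof (exp_ineq1_le u). nra.
    - pose proof (exp_ineq1_le u). pose proof (exp_le u 0 ltac:(lra)). rewrite exp_0 in *. nra. }
  assert (He: exp (-u) <= 3).
  { pose proof (exp_le (-u) 1 ltac:(lra)). pose proof exp_le_3. lra. }
  pose proof (exp_pos (-u)).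
  rewrite E. pose proof (pow2_ge_0 (exp u - 1)).
  assert ((exp u - 1)^2 * exp (-u) <= (exp u - 1)^2 * 3) by (apply Rmult_le_compat_l; lra).
  pose proof (pow2_ge_0 u). lra.
Qed.

Lemma ch_lower u : u^2 <= 8 * (ch u - 1).
Proof.
  unfold ch.
  assert (Hs : forall x, exp x = exp (x/2) * exp (x/2)).
  { intro x. rewrite <- exp_plus. f_equal. field. }
  destruct (Rle_lt_dec 0 u).
  - pose proof (exp_ineq1_le (u/2)). pose proof (exp_ineq1_le (-u)). rewrite (Hs u). nra.
  - pose proof (exp_ineq1_le (-u/2)). pose proof (exp_ineq1_le u). rewrite (Hs (-u)).
    replace (- u / 2) with (-u/2) in * by field. nra.
Qed.

Lemma ch_mono a b : 0 <= a <= b -> ch a <= ch b.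
Proof.
  intro H. unfold ch. pose proof (exp_le a b (proj2 H)).
  pose proof (exp_le 0 a (proj1 H)). rewrite exp_0 in *.
  pose proof (exp_inv a). pose proof (exp_inv b). pose proof (exp_pos (-a)). pose proof (exp_pos (-b)).
  assert (exp (-b) <= exp (-a)) by (apply exp_le; lra).
  assert (exp (-a) - exp (-b) <= exp b - exp a).
  { assert (exp (-a) - exp (-b) = (exp b - exp a) * exp (-a) * exp (-b)) by nra.
    assert (exp (-a) * exp (-b) <= 1).
    { rewrite <- exp_plus, <- exp_0. apply exp_le. lra. }
    nra. }
  lra.
Qed.

Lemma ch_abs u : ch (Rabs u) = ch u.
Proof. destruct (Rle_lt_dec 0 u). rewrite Rabs_right; lra. rewrite Rabs_left, ch_even; lra. Qed.

Lemma ch_mono_abs u v : Rabs u <= Rabs v -> ch u <= ch v.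
Proof. intro H. rewrite <- ch_abs, <- (ch_abs v). apply ch_mono. split; auto. apply Rabs_pos. Qed.

Lemma ch_convex a b : ch (a + b) <= (ch (2*a) + ch (2*b)) * / 2.
Proof.
  unfold ch. rewrite !exp_plus. replace (- (a+b)) with (-a + -b) by ring. rewrite exp_plus.
  replace (2*a) with (a+a) by ring. replace (2*b) with (b+b) by ring.
  replace (- (a+a)) with (-a + -a) by ring. replace (- (b+b)) with (-b + -b) by ring.
  rewrite !exp_plus. pose proof (pow2_ge_0 (exp a - exp b)). pose proof (pow2_ge_0 (exp (-a) - exp (-b))). lra.
Qed.

Lemma Rabs_le_inv a b : Rabs a <= b -> -b <= a <= b.
Proof. intro H. pose proof (Rle_abs a). pose proof (Rle_abs (-a)). rewrite Rabs_Ropp in *. lra. Qed.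


Definition ent (e : bool*bool) : R := (if fst e then 1 else 0) * (if snd e then 1 else -1).

Lemma entry_ent p s i j : entry p s i j = ent (nth (i*p+j) s d0).
Proof. reflexivity. Qed.

Definition Zc (n p j : nat) (v : nat -> R) (s : sample) : R :=
  Rsum n (fun i => entry p s i j * v i).

Lemma colpos p i j : (j < p)%nat -> Nat.eqb ((i*p+j) mod p) j = true.
Proof.
  intro H. apply Nat.eqb_eq. rewrite Nat.add_comm, Nat.Div0.mod_add. apply Nat.mod_small; auto.
Qed.

Lemma Zc_dep n p j v : (j < p)%nat -> dep_on (fun m => Nat.eqb (m mod p) j) (Zc n p j v).
Proof.
  intros Hj s t Hst. unfold Zc. apply Rsum_ext. intros i Hi.
  rewrite !entry_ent, (Hst (i*p+j)%nat (colpos p i j Hj)). reflexivity.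
Qed.

Lemma Zc_minus n p j v w s : Zc n p j v s - Zc n p j w s = Zc n p j (fun i => v i - w i) s.
Proof. unfold Zc. rewrite <- Rsum_minus. apply Rsum_ext; intros; ring. Qed.

Lemma Ew_exp th mu c : Ew th (fun e => exp (mu * (ent e * c))) = (1 - th) + th * ch (mu * c).
Proof.
  unfold Ew, ent, ch; simpl.
  replace (mu * (1 * 1 * c)) with (mu * c) by ring.
  replace (mu * (1 * -1 * c)) with (- (mu * c)) by ring.
  replace (mu * (0 * 1 * c)) with 0 by ring.
  replace (mu * (0 * -1 * c)) with 0 by ring.
  rewrite exp_0. field.
Qed.

Lemma mgf_prod th n p j d mu : (j < p)%nat ->
  EE th (n*p) (fun s => exp (mu * Zc n p j d s)) = Rprod n (fun i => (1 - th) + th * ch (mu * d i)).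
Proof.
  intro Hj.
  transitivity (EE th (n*p) (fun s => Rprod n (fun i => exp (mu * (ent (nth (i*p+j) s d0) * d i))))).
  { apply EE_ext; intro s. unfold Zc. rewrite <- Rsum_scal, exp_Rsum. reflexivity. }
  rewrite (EE_prod th (n*p) n (fun i s => exp (mu * (ent (nth (i*p+j) s d0) * d i)))
             (fun i m => Nat.eqb m (i*p+j))).
  - apply Rprod_ext. intros i Hi.
    rewrite (EE_pos th (n*p) (i*p+j) (fun e => exp (mu * (ent e * d i)))) by nia.
    apply Ew_exp.
  - intros i Hi s t Hst. rewrite (Hst (i*p+j)%nat (Nat.eqb_refl _)). reflexivity.
  - intros i i' m H1 H2 H3. apply Nat.eqb_eq in H3. apply Nat.eqb_neq. nia.
Qed.

Lemma sum_sq n v w a : 0 < a -> l1norm n v <= 1 -> l1norm n w <= 1 ->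
  (forall i, (i < n)%nat -> Rabs (v i - w i) <= 2 * a) ->
  Rsum n (fun i => (v i - w i)^2) <= 4 * a.
Proof.
  intros Ha Hv Hw Hd. unfold l1norm in *.
  apply Rle_trans with (Rsum n (fun i => 2 * a * (Rabs (v i) + Rabs (w i)))).
  - apply Rsum_le. intros i Hi. pose proof (Hd i Hi).
    rewrite <- Rsqr_pow2, Rsqr_abs. unfold Rsqr.
    pose proof (Rabs_pos (v i - w i)).
    assert (Rabs (v i - w i) <= Rabs (v i) + Rabs (w i)).
    { unfold Rminus. eapply Rle_trans; [apply Rabs_triang|]. rewrite Rabs_Ropp. lra. }
    apply Rle_trans with (2 * a * Rabs (v i - w i)).
    + apply Rmult_le_compat_r; lra.
    + apply Rmult_le_compat_l; lra.
  - rewrite Rsum_scal, Rsum_plus. apply Rle_trans with (2 * a * 2); [apply Rmult_le_compat_l; lra | lra].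
Qed.

Lemma mgf_bound th n p j v w a mu : 0 <= th <= 1 -> (j < p)%nat -> 0 < a ->
  l1norm n v <= 1 -> l1norm n w <= 1 ->
  (forall i, (i < n)%nat -> Rabs (v i - w i) <= 2 * a) ->
  Rabs mu * (2 * a) <= 1 ->
  EE th (n*p) (fun s => exp (mu * Zc n p j (fun i => v i - w i) s)) <= exp (56 * th * mu^2 * a).
Proof.
  intros Hth Hj Ha Hv Hw Hd Hmu.
  rewrite mgf_prod by auto.
  apply Rle_trans with (Rprod n (fun i => exp (th * (ch (mu * (v i - w i)) - 1)))).
  - apply Rprod_le. intros i Hi. pose proof (ch_ge1 (mu * (v i - w i))). split; [nra|].
    pose proof (exp_ineq1_le (th * (ch (mu * (v i - w i)) - 1))). lra.
  - rewrite <- exp_Rsum. apply exp_le.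
    apply Rle_trans with (Rsum n (fun i => th * 14 * mu^2 * (v i - w i)^2)).
    + apply Rsum_le. intros i Hi.
      assert (Hb : -1 <= mu * (v i - w i) <= 1).
      { apply Rabs_le_inv. rewrite Rabs_mult. pose proof (Hd i Hi). pose proof (Rabs_pos mu).
        pose proof (Rabs_pos (v i - w i)). nra. }
      pose proof (ch_upper _ Hb) as Hc. replace ((mu * (v i - w i))^2) with (mu^2 * (v i - w i)^2) in Hc by ring.
      apply Rmult_le_compat_l with (r := th) in Hc; [|lra]. lra.
    +
      rewrite Rsum_scal. pose proof (sum_sq n v w a Ha Hv Hw Hd).
      assert (0 <= th * 14 * mu^2) by (pose proof (pow2_ge_0 mu); nra). nra.
Qed.

Lemma ch_mgf th n p j v w a mu : 0 <= th <= 1 -> (j < p)%nat -> 0 < a ->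
  l1norm n v <= 1 -> l1norm n w <= 1 ->
  (forall i, (i < n)%nat -> Rabs (v i - w i) <= 2 * a) ->
  Rabs mu * (2 * a) <= 1 ->
  EE th (n*p) (fun s => ch (mu * Zc n p j (fun i => v i - w i) s)) <= exp (56 * th * mu^2 * a).
Proof.
  intros Hth Hj Ha Hv Hw Hd Hmu.
  pose proof (mgf_bound th n p j v w a mu Hth Hj Ha Hv Hw Hd Hmu) as H1.
  assert (Hmu' : Rabs (-mu) * (2 * a) <= 1) by (rewrite Rabs_Ropp; auto).
  pose proof (mgf_bound th n p j v w a (-mu) Hth Hj Ha Hv Hw Hd Hmu') as H2.
  replace ((-mu)^2) with (mu^2) in H2 by ring.
  transitivity (EE th (n*p) (fun s => / 2 * exp (mu * Zc n p j (fun i => v i - w i) s)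
                                     + / 2 * exp (- mu * Zc n p j (fun i => v i - w i) s))).
  - right. apply EE_ext; intro s. unfold ch. replace (- (mu * Zc n p j (fun i => v i - w i) s)) with
      (- mu * Zc n p j (fun i => v i - w i) s) by ring. ring.
  - rewrite EE_lin. lra.
Qed.

Lemma col_bound th n p j v w a lam : 0 <= th <= 1 -> (j < p)%nat -> 0 < a ->
  l1norm n v <= 1 -> l1norm n w <= 1 ->
  (forall i, (i < n)%nat -> Rabs (v i - w i) <= 2 * a) ->
  0 <= lam -> 4 * a * lam <= 1 -> 224 * th * lam^2 * a <= / 96 ->
  EE th (n*p) (fun s => exp (lam * ((Rabs (Zc n p j v s) - Rabs (Zc n p j w s))
       - EE th (n*p) (fun s => Rabs (Zc n p j v s) - Rabs (Zc n p j w s)))))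
  <= exp (1347 * (224 * th * lam^2 * a)).
Proof.
  intros Hth Hj Ha Hv Hw Hd Hl Hl1 Hr.
  set (r := 224 * th * lam^2 * a) in *.
  set (k := (n*p)%nat).
  set (Zd := Zc n p j (fun i => v i - w i)).
  set (Y := fun s => Rabs (Zc n p j v s) - Rabs (Zc n p j w s)).
  set (m := EE th k Y).
  assert (Hr0 : 0 <= r).
  { unfold r. pose proof (pow2_ge_0 lam). repeat apply Rmult_le_pos; lra. }
  assert (Hexp : exp r - 1 <= 3 * r) by (apply expm1_le3; lra).
  assert (HQ2 : EE th k (fun s => ch (2 * lam * Zd s)) <= exp r).
  { unfold r. replace (224 * th * lam^2 * a) with (56 * th * (2*lam)^2 * a) by ring.
    apply ch_mgf; auto. rewrite Rabs_right; lra. }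
  assert (HQ1 : EE th k (fun s => ch (lam * Zd s)) <= exp r).
  { eapply Rle_trans; [apply (ch_mgf th n p j v w a lam); auto; rewrite Rabs_right; lra|].
    apply exp_le. unfold r. pose proof (pow2_ge_0 lam). assert (0 <= th * lam^2 * a) by (repeat apply Rmult_le_pos; lra). lra. }
  set (beta := EE th k (fun s => Rabs (lam * Zd s))).
  assert (Hb0 : 0 <= beta).
  { unfold beta. rewrite <- (EE_const th k 0). apply EE_mono; auto. intro; apply Rabs_pos. }
  assert (Hb2 : beta^2 <= 24 * r).
  { assert (H : EE th k (fun s => beta * Rabs (lam * Zd s))
                <= EE th k (fun s => (beta^2 * / 2 - 4) + 4 * ch (lam * Zd s))).
    { apply EE_mono; auto. intro s. pose proof (ch_lower (lam * Zd s)).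
      pose proof (pow2_ge_0 (beta - Rabs (lam * Zd s))).
      rewrite <- (Rsqr_pow2 (lam * Zd s)), Rsqr_abs, Rsqr_pow2 in H.
      set (t := Rabs (lam * Zd s)) in *. set (c := ch (lam * Zd s)) in *.
      assert (beta * t <= beta^2 * / 2 + t^2 * / 2) by nra. lra. }
    rewrite EE_scal, EE_plus, EE_const, EE_scal in H. fold beta in H. nra. }
  assert (Hb1 : 2 * beta <= 1).
  { assert (beta^2 <= / 4) by lra. nra. }
  assert (Hm : lam * Rabs m <= beta).
  { unfold beta. replace (EE th k (fun s => Rabs (lam * Zd s))) with (lam * EE th k (fun s => Rabs (Zd s))).
    - apply Rmult_le_compat_l; auto. unfold m. eapply Rle_trans. apply EE_abs; auto.
      apply EE_mono; auto. intro s. unfold Y, Zd. rewrite <- Zc_minus.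
      apply Rabs_le. pose proof (Rabs_triang_inv (Zc n p j v s) (Zc n p j w s)).
      pose proof (Rabs_triang_inv (Zc n p j w s) (Zc n p j v s)) as Ht2.
      rewrite (Rabs_minus_sym (Zc n p j w s)) in Ht2. lra.
    - rewrite <- EE_scal. apply EE_ext; intro s. rewrite Rabs_mult, (Rabs_right lam); lra. }
  assert (Hpt : forall s, exp (lam * (Y s - m)) <=
              (ch (2 * beta) - 1 - lam * m) + lam * Y s + ch (2 * lam * Zd s)).
  { intro s. pose proof (exp_le_ch (lam * (Y s - m))) as Hel.
    assert (HY : Rabs (Y s) <= Rabs (Zd s)).
    { unfold Y, Zd. rewrite <- Zc_minus.
      apply Rabs_le. pose proof (Rabs_triang_inv (Zc n p j v s) (Zc n p j w s)).
      pose proof (Rabs_triang_inv (Zc n p j w s) (Zc n p j v s)) as Ht2.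
      rewrite (Rabs_minus_sym (Zc n p j w s)) in Ht2. lra. }
    assert (Hc : ch (lam * (Y s - m)) <= ch (Rabs (lam * Zd s) + beta)).
    { apply ch_mono_abs. rewrite (Rabs_right (Rabs (lam * Zd s) + beta))
        by (pose proof (Rabs_pos (lam * Zd s)); lra).
      rewrite Rabs_mult, Rabs_mult, (Rabs_right lam) by lra.
      eapply Rle_trans. apply Rmult_le_compat_l. lra. unfold Rminus. apply Rabs_triang.
      rewrite Rabs_Ropp. pose proof (Rmult_le_compat_l lam _ _ Hl HY). lra. }
    pose proof (ch_convex (Rabs (lam * Zd s)) beta) as Hcv.
    replace (ch (2 * Rabs (lam * Zd s))) with (ch (2 * lam * Zd s)) in Hcv.
    - lra.
    - rewrite <- ch_abs. f_equal. rewrite !Rabs_mult, (Rabs_right 2), (Rabs_right lam) by lra. ring. }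
  eapply Rle_trans. apply EE_mono; auto. exact Hpt.
  rewrite EE_plus, EE_plus, EE_const, EE_scal. fold m.
  pose proof (ch_upper (2 * beta) ltac:(lra)).
  pose proof (exp_ineq1_le (1347 * r)). nra.
Qed.


Lemma Rprod_exp_const k c : Rprod k (fun _ => exp c) = exp (INR k * c).
Proof.
  induction k; cbn [Rprod]. rewrite Rmult_0_l, exp_0; reflexivity.
  rewrite IHk, <- exp_plus, S_INR. f_equal. ring.
Qed.

Lemma normXTv_Zc n p s v : normXTv n p s v = Rsum p (fun j => Rabs (Zc n p j v s)).
Proof. reflexivity. Qed.

Lemma chernoff th n p v w a lam t : 0 <= th <= 1 -> 0 < a ->
  l1norm n v <= 1 -> l1norm n w <= 1 ->
  (forall i, (i < n)%nat -> Rabs (v i - w i) <= 2 * a) ->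
  0 <= lam -> 4 * a * lam <= 1 -> 224 * th * lam^2 * a <= / 96 ->
  EE th (n*p) (fun s => if Rle_dec t ((normXTv n p s v - normXTv n p s w)
                    - EE th (n*p) (fun s => normXTv n p s v - normXTv n p s w)) then 1 else 0)
  <= exp (- (lam * t) + INR p * (1347 * (224 * th * lam^2 * a))).
Proof.
  intros Hth Ha Hv Hw Hd Hl Hl1 Hr.
  set (k := (n*p)%nat).
  set (Y := fun j s => Rabs (Zc n p j v s) - Rabs (Zc n p j w s)).
  assert (HS : forall s, normXTv n p s v - normXTv n p s w = Rsum p (fun j => Y j s)).
  { intro s. rewrite !normXTv_Zc, <- Rsum_minus. reflexivity. }
  assert (HES : EE th k (fun s => normXTv n p s v - normXTv n p s w) = Rsum p (fun j => EE th k (Y j))).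
  { rewrite <- EE_Rsum. apply EE_ext. exact HS. }
  rewrite HES.
  set (F := fun j s => exp (lam * (Y j s - EE th k (Y j)))).
  eapply Rle_trans.
  { apply EE_mono with (g := fun s => exp (- (lam * t)) * Rprod p (fun j => F j s)); auto.
    intro s. rewrite HS.
    assert (HP : Rprod p (fun j => F j s) = exp (lam * (Rsum p (fun j => Y j s) - Rsum p (fun j => EE th k (Y j))))).
    { unfold F. rewrite <- exp_Rsum. f_equal. rewrite <- Rsum_minus, <- Rsum_scal. reflexivity. }
    rewrite HP, <- exp_plus.
    destruct (Rle_dec t _).
    - rewrite <- exp_0. apply exp_le. nra.
    - left; apply exp_pos. }
  rewrite EE_scal.
  rewrite (EE_prod th k p F (fun j m => Nat.eqb (m mod p) j)).
  - rewrite exp_plus. apply Rmult_le_compat_l. left; apply exp_pos.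
    rewrite <- Rprod_exp_const. apply Rprod_le. intros j Hj. split.
    + rewrite <- (EE_const th k 0). apply EE_mono; auto. intro; left; apply exp_pos.
    + apply col_bound; auto.
  - intros j Hj s1 s2 Hs. unfold F, Y.
    rewrite (Zc_dep n p j v Hj s1 s2 Hs), (Zc_dep n p j w Hj s1 s2 Hs). reflexivity.
  - intros i i' m H1 H2 H3. apply Nat.eqb_eq in H3. apply Nat.eqb_neq. lia.
Qed.


Lemma ratio_le x y z w : 0 < y -> x * y = z -> z <= w -> x <= w / y.
Proof. intros Hy H1 H2. apply Rmult_le_reg_r with y; auto. unfold Rdiv. rewrite Rmult_assoc, Rinv_l by lra. lra. Qed.

Lemma ln_le' x y : 0 < x -> x <= y -> ln x <= ln y.
Proof. intros Hx H. destruct (Req_dec x y). subst; lra. left. apply ln_increasing; lra. Qed.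

Theorem mainTheorem8 :
  forall c0 : R, 0 < c0 ->
  exists C0 : R, 0 < C0 /\
  forall C : R, C0 <= C ->
  exists N : nat, forall n : nat, (N <= n)%nat ->
  forall (theta : R), / INR n <= theta <= 1 ->
  forall p : nat,
    INR p - 1 < C * INR n * (ln (INR n)) ^ 3 <= INR p ->   (* p = ceil(C n log^3 n) *)
  let T := c0 * INR p * sqrt (theta / INR n) / ln (INR n) in
  forall l : nat,
  let alpha := 2 ^ l * (2 / INR n) in
  alpha <= 1 ->
  forall v w : nat -> R,
    l1norm n v <= 1 -> l1norm n w <= 1 ->
    (forall i : nat, (i < n)%nat -> Rabs (v i - w i) <= 2 * alpha) ->
    Rabs (mu n p theta v - mu n p theta w) <= T / 6 ->
    ProbGe n p theta (fun s => Rabs (normXTv n p s v - normXTv n p s w)) T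
      <= exp (- (5 * / alpha * ln (INR n))).
Proof.
  intros c0 Hc0.
  set (K := 301728).
  exists (864 * K / (25 * c0^2)). split.
  { unfold K. apply Rdiv_lt_0_compat; [lra|]. pose proof (pow2_ge_0 c0). nra. }
  intros C HC.
  assert (HK : 0 < K) by (unfold K; lra).
  exists (Z.to_nat (up (exp (1 + c0)))).
  intros n Hn theta Hth p Hp T l alpha Hal v w Hv Hw Hd Hmu.
  set (nn := INR n) in *. set (L := ln nn) in *. set (P := INR p) in *.
  assert (Hnn : exp (1 + c0) <= nn).
  { destruct (archimed (exp (1 + c0))) as [Ha1 _].
    assert (Hup : (0 <= up (exp (1 + c0)))%Z).
    { apply le_IZR. pose proof (exp_pos (1 + c0)). lra. }
    apply le_INR in Hn. rewrite INR_IZR_INZ, Z2Nat.id in Hn by auto. unfold nn. lra. }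
  assert (Hnn0 : 0 < nn) by (pose proof (exp_pos (1 + c0)); lra).
  assert (HL : 1 + c0 <= L).
  { unfold L. rewrite <- (ln_exp (1 + c0)). apply ln_le'; auto. apply exp_pos. }
  assert (HL0 : 0 < L) by lra.
  assert (Hth0 : 0 < theta).
  { destruct Hth as [Hth _]. pose proof (Rinv_0_lt_compat nn Hnn0). lra. }
  assert (Hth01 : 0 <= theta <= 1) by lra.
  assert (Ha0 : 0 < alpha).
  { unfold alpha. apply Rmult_lt_0_compat. apply pow_lt; lra. apply Rdiv_lt_0_compat; lra. }
  assert (Hna : 2 <= nn * alpha).
  { unfold alpha. pose proof (pow_R1_Rle 2 l ltac:(lra)).
    replace (nn * (2 ^ l * (2 / nn))) with (2 * 2^l) by (field; lra). lra. }
  clearbody alpha.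
  assert (HL3 : 0 < L^3) by (apply pow_lt; lra).
  assert (HP0 : 0 < P).
  { destruct Hp as [_ Hp]. assert (0 < C).
    { eapply Rlt_le_trans; [|exact HC]. unfold K. apply Rdiv_lt_0_compat; [lra|].
      pose proof (pow2_ge_0 c0). nra. }
    assert (0 < C * nn * L^3) by (repeat apply Rmult_lt_0_compat; lra). lra. }
  set (sq := sqrt (theta / nn)) in *.
  assert (Hsq2 : sq * sq = theta / nn) by (apply sqrt_sqrt; apply Rlt_le, Rdiv_lt_0_compat; lra).
  assert (Hsq0 : 0 < sq) by (apply sqrt_lt_R0, Rdiv_lt_0_compat; lra).
  assert (Hsqth : sq <= theta).
  { apply Rle_trans with (sqrt (theta * theta)); [|rewrite sqrt_square; lra]. unfold sq. apply sqrt_le_1.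
    - apply Rlt_le, Rdiv_lt_0_compat; lra.
    - nra.
    - destruct Hth as [Hth _]. unfold Rdiv. rewrite Rmult_comm.
      apply Rmult_le_compat_r; lra. }
  assert (HT0 : 0 < T).
  { unfold T. apply Rdiv_lt_0_compat; [|lra]. repeat apply Rmult_lt_0_compat; lra. }
  set (t := 5 * T / 6).
  set (D := P * K * theta * alpha).
  assert (HD : 0 < D) by (unfold D; apply Rmult_lt_0_compat; [|exact Ha0]; unfold K; repeat apply Rmult_lt_0_compat; lra).
  set (lam := t / (2 * D)).
  assert (Hlam : 0 <= lam) by (unfold lam, t; apply Rlt_le, Rdiv_lt_0_compat; lra).
  assert (Ht2 : t^2 = 25 / 36 * c0^2 * P^2 * (theta / nn) / L^2).
  { unfold t, T. rewrite <- Hsq2. fold sq. field. lra. }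
  assert (HC1 : 4 * alpha * lam <= 1).
  { assert (E : 4 * alpha * lam * (L * K * theta) = 5 / 3 * c0 * sq).
    { unfold lam, t, T, D. fold sq. field. repeat split; unfold K; lra. }
    assert (c0 * sq <= L * theta) by (apply Rmult_le_compat; lra).
    assert (0 < L * K * theta) by (unfold K; repeat apply Rmult_lt_0_compat; lra).
    pose proof (ratio_le _ _ _ (L * K * theta) H0 E).
    assert (5 / 3 * c0 * sq <= L * K * theta) by (unfold K in *; nra).
    specialize (H1 H2). unfold Rdiv in H1. rewrite Rinv_r in H1 by lra. lra. }
  assert (HC2 : 224 * theta * lam^2 * alpha <= / 96).
  { assert (E : theta * lam^2 * alpha * (144 * L^2 * K^2 * (nn * alpha)) = 25 * c0^2).
    { replace (theta * lam^2 * alpha) with (theta * alpha * t^2 / (4 * D^2)) by (unfold lam; field; lra).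
      rewrite Ht2. unfold D. field. unfold K. repeat split; lra. }
    assert (Hpos : 0 <= theta * lam^2 * alpha) by (pose proof (pow2_ge_0 lam); apply Rmult_le_pos; [apply Rmult_le_pos|]; lra).
    assert (Hc2 : c0^2 <= L^2) by (apply pow_incr; lra).
    assert (HLK : 0 < L^2 * K^2) by (unfold K; pose proof (pow_lt L 2 HL0); nra).
    assert (theta * lam^2 * alpha * (288 * L^2 * K^2) <= 25 * L^2).
    { apply Rle_trans with (theta * lam^2 * alpha * (144 * L^2 * K^2 * (nn * alpha))).
      - apply Rmult_le_compat_l; auto. nra.
      - lra. }
    assert (theta * lam^2 * alpha * (288 * K^2) <= 25).
    { assert (0 < L^2) by (apply pow_lt; lra). nra. }
    unfold K in *. lra. }
  assert (HX : - (lam * t) + P * (1347 * (224 * theta * lam^2 * alpha)) <= - (6 * L / alpha)).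
  { assert (E1 : - (lam * t) + P * (1347 * (224 * theta * lam^2 * alpha)) = - (t^2 / (4 * D))).
    { unfold lam, D, K. field. repeat split; lra. }
    rewrite E1.
    assert (E2 : t^2 / (4 * D) = 25 * c0^2 * P / (144 * K * nn * L^2 * alpha)).
    { rewrite Ht2. unfold D, K. field. repeat split; lra. }
    rewrite E2.
    assert (HCc : 864 * K <= 25 * c0^2 * C).
    { assert (0 < 25 * c0^2) by (pose proof (pow_lt c0 2 Hc0); lra).
      apply Rmult_le_compat_l with (r := 25 * c0^2) in HC; [|lra].
      replace (25 * c0 ^ 2 * (864 * K / (25 * c0 ^ 2))) with (864 * K) in HC by (field; lra). lra. }
    assert (HPc : 864 * K * (nn * L^3) <= 25 * c0^2 * P).
    { destruct Hp as [_ Hp].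
      apply Rle_trans with (25 * c0^2 * C * (nn * L^3)).
      - apply Rmult_le_compat_r; [|lra]. apply Rlt_le, Rmult_lt_0_compat; lra.
      - assert (0 <= 25 * c0^2) by (pose proof (pow2_ge_0 c0); lra).
        replace (25 * c0 ^ 2 * C * (nn * L ^ 3)) with (25 * c0^2 * (C * nn * L^3)) by ring.
        apply Rmult_le_compat_l; lra. }
    assert (Hden : 0 < 144 * K * nn * L^2 * alpha).
    { unfold K. assert (0 < L^2) by (apply pow_lt; lra). repeat apply Rmult_lt_0_compat; lra. }
    apply Ropp_le_contravar.
    apply Rmult_le_reg_r with (144 * K * nn * L^2 * alpha); auto.
    replace (25 * c0 ^ 2 * P / (144 * K * nn * L ^ 2 * alpha) * (144 * K * nn * L ^ 2 * alpha)) with (25 * c0^2 * P) by (field; lra).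
    replace (6 * L / alpha * (144 * K * nn * L ^ 2 * alpha)) with (864 * K * (nn * L^3)) by (field; lra).
    lra. }
  assert (HES : EE theta (n*p) (fun s => normXTv n p s v - normXTv n p s w) = mu n p theta v - mu n p theta w).
  { rewrite EE_minus. reflexivity. }
  assert (HES' : EE theta (n*p) (fun s => normXTv n p s w - normXTv n p s v) = - (mu n p theta v - mu n p theta w)).
  { rewrite EE_minus. unfold mu, Expect. fold (EE theta (n*p) (fun s => normXTv n p s w)).
    fold (EE theta (n*p) (fun s => normXTv n p s v)). ring. }
  assert (Hd' : forall i, (i < n)%nat -> Rabs (w i - v i) <= 2 * alpha).
  { intros i Hi. rewrite Rabs_minus_sym. auto. }
  pose proof (chernoff theta n p v w alpha lam t Hth01 Ha0 Hv Hw Hd Hlam HC1 HC2) as B1.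
  pose proof (chernoff theta n p w v alpha lam t Hth01 Ha0 Hw Hv Hd' Hlam HC1 HC2) as B2.
  rewrite HES in B1. rewrite HES' in B2.
  set (m := mu n p theta v - mu n p theta w) in *.
  unfold ProbGe. change (Expect n p theta) with (EE theta (n*p)).
  eapply Rle_trans.
  { apply EE_mono with (g := fun s =>
      (if Rle_dec t ((normXTv n p s v - normXTv n p s w) - m) then 1 else 0)
      + (if Rle_dec t ((normXTv n p s w - normXTv n p s v) - - m) then 1 else 0)); auto.
    intro s. apply Rabs_le_inv in Hmu.
    set (S := normXTv n p s v - normXTv n p s w).
    replace (normXTv n p s w - normXTv n p s v) with (- S) by (unfold S; ring).
    destruct (Rle_dec T (Rabs S)) as [H1|H1];
    destruct (Rle_dec t (S - m)); destruct (Rle_dec t (- S - - m)); try lra.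
    exfalso. destruct (Rcase_abs S) as [Hs|Hs];
      [rewrite Rabs_left in H1 by lra | rewrite Rabs_right in H1 by lra]; unfold t in *; lra. }
  rewrite EE_plus.
  eapply Rle_trans. apply Rplus_le_compat; [exact B1 | exact B2].
  assert (Hfin : exp (- (6 * L / alpha)) * 2 <= exp (- (5 * / alpha * L))).
  { replace (- (6 * L / alpha)) with (- (L / alpha) + - (5 * / alpha * L)) by (field; lra).
    rewrite exp_plus.
    assert (exp (- (L / alpha)) * 2 <= 1).
    { assert (1 <= L / alpha).
      { apply Rmult_le_reg_r with alpha; auto. unfold Rdiv. rewrite Rmult_assoc, Rinv_l by lra. lra. }
      assert (exp (- (L / alpha)) <= exp (Ropp 1)) by (apply exp_le; lra).
      pose proof (exp_ineq1_le 1). pose proof (exp_inv 1). pose proof (exp_pos (Ropp 1)).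
      assert (2 * exp (Ropp 1) <= exp 1 * exp (Ropp 1)) by (apply Rmult_le_compat_r; lra). lra. }
    pose proof (exp_pos (- (5 * / alpha * L))).
    replace (exp (- (L / alpha)) * exp (- (5 * / alpha * L)) * 2) with ((exp (- (L / alpha)) * 2) * exp (- (5 * / alpha * L))) by ring.
    apply Rle_trans with (1 * exp (- (5 * / alpha * L))); [apply Rmult_le_compat_r; lra | lra]. }
  change (INR p) with P. pose proof (exp_le _ _ HX). lra.
Qed.
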